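(* Fix $0<d<1$. Let $A$ be an $m\times n$ matrix which is a sub-matrix (consisting of $n$ of the columns) of some $m\times m$ orthonormal matrix, and such that all rows of $A$ have equal $\ell^2$ norm. Then there exists a subset $J\subset\{1,\dots,m\}$ with $|J|\ge(1-d)n$ such that \[ C(d)\,\frac{n}{m}\,\|w\|^2\le \|A(J)^{\mathrm{T}}w\|_{\ell_2^n}^2\qquad\text{for all } w\in\ell_2(J), \] where $C(d)=(1-\sqrt{1-d})^2$.
   Context: $\ell_2^n$ is the $n$-dimensional space with Euclidean norm $\|(a_r)\|^2=\sum|a_r|^2$. For $J\subset\{1,\dots,m\}$, $\ell_2(J)$ is the $|J|$-dimensional coordinate subspace of $\ell_2^m$ indexed by $J$, $A(J)$ is the sub-matrix of $A$ consisting of the rows with indices in $J$, and $A(J)^{\mathrm{T}}$ is its transpose. $|J|$ is the cardinality of $J$. *)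

(* Defs.v *)
From HB Require Import structures.
From mathcomp Require Import all_boot all_order all_algebra.
From mathcomp Require Import reals.
Set Implicit Arguments. Unset Strict Implicit. Unset Printing Implicit Defensive.
Import Order.TTheory GRing.Theory Num.Theory.
Local Open Scope ring_scope.

Definition sqnorm (R : realType) (k : nat) (v : 'cV[R]_k) : R :=
  \sum_(i < k) v i 0 ^+ 2.

Definition row_sqnorm (R : realType) (m n : nat) (A : 'M[R]_(m, n)) (i : 'I_m) : R :=
  \sum_(j < n) A i j ^+ 2.

Definition orthonormal_mx (R : realType) (m : nat) (U : 'M[R]_m) : Prop :=
  U *m U^T = 1%:M /\ U^T *m U = 1%:M.

Definition orth_col_submx (R : realType) (m n : nat) (A : 'M[R]_(m, n)) : Prop :=
  exists (U : 'M[R]_m) (f : 'I_n -> 'I_m),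
    orthonormal_mx U /\ injective f /\ A = colsub f U.

(* A(J): the submatrix of A consisting of the rows with indices in J
   (in increasing order); an element of 'M_(|J|, n). *)
Definition rows_of (R : realType) (m n : nat) (A : 'M[R]_(m, n)) (J : {set 'I_m}) :
  'M[R]_(#|J|, n) := rowsub (@enum_val _ (mem J)) A.

Definition Cd (R : realType) (d : R) : R := (1 - Num.sqrt (1 - d)) ^+ 2.

(* Main.v *)
Require Import Defs.
From HB Require Import structures.
From mathcomp Require Import all_boot all_order all_algebra.
From mathcomp Require Import reals.
From mathcomp Require Import ring lra.
Import Order.TTheory GRing.Theory Num.Theory.
Local Open Scope ring_scope.
Set Implicit Arguments. Unset Strict Implicit. Unset Printing Implicit Defensive.

Section Lin.
Variable R : realType.

Definition psdm p (M : 'M[R]_p) := forall v : 'rV_p, 0 <= (v *m M *m v^T) 0 0.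
Definition pdm p (M : 'M[R]_p) := forall v : 'rV_p, v != 0 -> 0 < (v *m M *m v^T) 0 0.

Lemma pdm_psdm p (M : 'M[R]_p) : pdm M -> psdm M.
Proof.
move=> H v; have [->|v0] := eqVneq v 0; last exact/ltW/H.
by rewrite !mul0mx mxE.
Qed.

Lemma pdm_unit p (M : 'M[R]_p) : pdm M -> M \in unitmx.
Proof.
move=> H; rewrite -row_free_unit -kermx_eq0; apply/negPn/negP => HK.
have [i Hi] : exists i, row i (kermx M) != 0.
  apply/existsP; move: HK; apply: contraR; rewrite negb_exists => /forallP Hr.
  by apply/eqP/row_matrixP => i; rewrite row0; apply/eqP; move: (Hr i); rewrite negbK.
have := H _ Hi; rewrite -row_mul mulmx_ker row0 mul0mx mxE.
by rewrite ltxx.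
Qed.

Lemma sum_row_quad p n (Y : 'M[R]_(p, n)) (W : 'M[R]_n) :
  \sum_t (row t Y *m W *m (row t Y)^T) 0 0 = \tr (Y *m W *m Y^T).
Proof.
rewrite /mxtrace; apply: eq_bigr => t _.
rewrite !mxE; apply: eq_bigr => k _; rewrite !mxE; congr (_ * _).
by apply: eq_bigr => l _; rewrite !mxE.
Qed.

Lemma psdm_sum_tr p q (Y : 'M[R]_(p, q)) (W : 'M[R]_q) :
  psdm W -> 0 <= \tr (Y *m W *m Y^T).
Proof. by move=> H; rewrite -sum_row_quad; apply: sumr_ge0 => t _; apply: H. Qed.

Lemma psdm1 p : psdm (1%:M : 'M[R]_p).
Proof.
move=> v; rewrite mulmx1 mxE; apply: sumr_ge0 => i _; rewrite mxE; exact: sqr_ge0.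
Qed.

Lemma invmx_sym p (M : 'M[R]_p) : M^T = M -> (invmx M)^T = invmx M.
Proof. by move=> H; rewrite trmx_inv H. Qed.

Lemma inv_pdm p (M : 'M[R]_p) : M^T = M -> pdm M -> pdm (invmx M).
Proof.
move=> Hs H v v0; have Mu := pdm_unit H.
have : v *m invmx M != 0.
  apply: contra v0 => /eqP e; apply/eqP.
  by rewrite -[v]mulmx1 -(mulVmx Mu) mulmxA e mul0mx.
move=> /H; congr (0 < _ 0 0).
rewrite trmx_mul invmx_sym // -!mulmxA; congr (_ *m _).
by rewrite !mulmxA mulVmx // mul1mx.
Qed.

Lemma invmx_eq p (M N : 'M[R]_p) : M *m N = 1%:M -> invmx M = N.
Proof.
move=> e; have [Mu _] := mulmx1_unit e.
by rewrite -[invmx M]mulmx1 -e mulmxA mulVmx // mul1mx.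
Qed.

End Lin.

Section Border.
Variable R : realType.

Lemma e00D p q (A B : 'M[R]_(p,q)) i j : (A + B) i j = A i j + B i j.
Proof. by rewrite mxE. Qed.
Lemma e00B p q (A B : 'M[R]_(p,q)) i j : (A - B) i j = A i j - B i j.
Proof. by rewrite !mxE. Qed.
Lemma e00N p q (A : 'M[R]_(p,q)) i j : (- A) i j = - A i j.
Proof. by rewrite mxE. Qed.
Lemma e00Z p q (A : 'M[R]_(p,q)) c i j : (c *: A) i j = c * A i j.
Proof. by rewrite mxE. Qed.
Lemma sc0 k : (0 : R)%:M = 0 :> 'M[R]_k.
Proof. by apply/matrixP => i j; rewrite !mxE mul0rn. Qed.
Lemma sc00 (c : R) : (c%:M : 'M[R]_1) 0 0 = c.
Proof. by rewrite mxE eqxx mulr1n. Qed.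
Lemma tr11 (A : 'M[R]_1) : A^T = A.
Proof. by apply/matrixP => i j; rewrite !ord1 mxE. Qed.

Variables (p : nat) (M : 'M[R]_p) (g : 'cV[R]_p) (a : 'M[R]_1).
Hypothesis Msym : M^T = M.
Hypothesis Mpd : pdm M.
Let P := invmx M.
Let s := a - g^T *m P *m g.
Hypothesis spos : 0 < s 0 0.

Let Mu : M \in unitmx. Proof. exact: pdm_unit. Qed.
Let Psym : P^T = P. Proof. exact: invmx_sym. Qed.

Lemma border_quad (v1 : 'rV[R]_p) (z : R) :
  (row_mx v1 z%:M *m block_mx M g g^T a *m (row_mx v1 z%:M)^T) 0 0 =
  ((v1 + z *: (g^T *m P)) *m M *m (v1 + z *: (g^T *m P))^T) 0 0 + z ^+ 2 * s 0 0.
Proof.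
rewrite mul_row_block tr_row_mx mul_row_col !mul_scalar_mx tr_scalar_mx !mul_mx_scalar.
rewrite [LHS]e00D mulmxDl -scalemxAl e00D !e00Z e00D e00Z.
rewrite linearD linearZ /= trmx_mul Psym trmxK.
rewrite mulmxDl mulmxDl !mulmxDr !e00D.
rewrite -!scalemxAl -!scalemxAr !e00Z.
rewrite -!mulmxA (mulKVmx Mu) (mulKmx Mu) e00N.
have -> : (g^T *m v1^T) 0 0 = (v1 *m g) 0 0.
  by rewrite -trmx_mul [LHS]mxE.
rewrite expr2; ring.
Qed.



Lemma border_pd : pdm (block_mx M g g^T a).
Proof.
move=> v v0; rewrite -(hsubmxK v) (mx11_scalar (rsubmx v)) border_quad.
set z := rsubmx v 0 0; set v1 := lsubmx v.
have [z0|z0] := eqVneq z 0.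
  rewrite z0 scale0r addr0 expr0n /= mul0r addr0; apply: Mpd.
  apply: contra v0 => /eqP e; apply/eqP.
  by rewrite -(hsubmxK v) -/v1 e (mx11_scalar (rsubmx v)) -/z z0 sc0 row_mx0.
apply: ltr_pwDr; first by apply: mulr_gt0 => //; rewrite lt_def sqrf_eq0 z0 sqr_ge0.
exact: pdm_psdm.
Qed.

Let sig : 'M[R]_1 := ((s 0 0)^-1)%:M.
Let ssig : s *m sig = 1%:M.
Proof. by rewrite (mx11_scalar s) /sig mul_scalar_mx scale_scalar_mx mulfV // gt_eqF. Qed.

Lemma border_inv :
  invmx (block_mx M g g^T a) =
  block_mx (P + P *m g *m sig *m g^T *m P) (- (P *m g *m sig))
           (- (sig *m g^T *m P)) sig.
Proof.
apply: invmx_eq; rewrite mulmx_block (scalar_mx_block p 1).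
have MP : M *m P = 1%:M by exact: mulmxV.
congr block_mx.
- by rewrite mulmxDr mulmxN !mulmxA MP mul1mx addrK.
- by rewrite mulmxN !mulmxA MP mul1mx addNr.
- rewrite mulmxDr !mulmxN !mulmxA.
  have -> : a *m sig *m g^T *m P = g^T *m P + g^T *m P *m g *m sig *m g^T *m P.
    have ea : a = s + g^T *m P *m g by rewrite /s subrK.
    by rewrite {1}ea mulmxDl mulmxDl mulmxDl ssig mul1mx.
  by rewrite subrr.
- by rewrite mulmxN !mulmxA addrC -mulmxBl -/s ssig.
Qed.

Lemma border_tr :
  \tr (invmx (block_mx M g g^T a)) =
  \tr P + (1 + (g^T *m P *m P *m g) 0 0) / s 0 0.
Proof.
rewrite border_inv mxtrace_block mxtraceD trace_mx11 /sig sc00.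
have -> : P *m g *m (s 0 0)^-1%:M *m g^T *m P = (P *m g) *m ((s 0 0)^-1%:M *m g^T *m P).
  by rewrite !mulmxA.
rewrite mxtrace_mulC trace_mx11 mul_scalar_mx -!scalemxAl !mulmxA e00Z.
rewrite -addrA; congr (_ + _); ring.
Qed.

End Border.

Section Shift.
Variable R : realType.

Lemma pdm_shift p (N : 'M[R]_p) d : pdm N -> 0 <= d -> pdm (N + d%:M).
Proof.
move=> H d0 v v0; rewrite mulmxDr mulmxDl e00D.
apply: ltr_wpDr; last exact: H.
rewrite mul_mx_scalar -scalemxAl e00Z; apply: mulr_ge0 => //.
by have := psdm1 v; rewrite mulmx1.
Qed.

Lemma sym_shift p (N : 'M[R]_p) d : N^T = N -> (N + d%:M)^T = N + d%:M.
Proof. by move=> H; rewrite linearD /= H tr_scalar_mx. Qed.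

Lemma tr_inv_ge0 p (M : 'M[R]_p) : M^T = M -> pdm M -> 0 <= \tr (invmx M).
Proof.
move=> Hs H; have := psdm_sum_tr 1%:M (pdm_psdm (inv_pdm Hs H)).
by rewrite mul1mx trmx1 mulmx1.
Qed.

Lemma tr_inv2_ge0 p (M : 'M[R]_p) : M^T = M -> 0 <= \tr (invmx M *m invmx M).
Proof.
move=> Hs; have := psdm_sum_tr (invmx M) (@psdm1 R p).
by rewrite mulmx1 invmx_sym.
Qed.

Lemma shift_tr p (N : 'M[R]_p) d : N^T = N -> pdm N -> 0 <= d ->
  d * \tr (invmx (N + d%:M) *m invmx (N + d%:M)) <=
  \tr (invmx N) - \tr (invmx (N + d%:M)).
Proof.
move=> Hs H d0.
set M := N + d%:M; set P := invmx M; set Q := invmx N.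
have Mu : M \in unitmx by apply: pdm_unit; apply: pdm_shift.
have Nu : N \in unitmx by apply: pdm_unit.
have Psym : P^T = P by apply: invmx_sym; apply: sym_shift.
have e1 : Q = P + d *: (P *m Q).
  rewrite -{1}[Q]mul1mx -(mulVmx Mu) -/P -mulmxA /M mulmxDl (mulmxV Nu).
  by rewrite mul_scalar_mx mulmxDr mulmx1 scalemxAr.
have e2 : P *m Q = P *m P + d *: (P *m P *m Q).
  by rewrite {1}e1 mulmxDr -scalemxAr mulmxA.
have e3 : 0 <= \tr (P *m P *m Q).
  rewrite -mulmxA mxtrace_mulC -mulmxA mulmxA -{2}Psym.
  exact: psdm_sum_tr (pdm_psdm (inv_pdm Hs H)).
rewrite {1}e1 mxtraceD mxtraceZ e2 mxtraceD mxtraceZ.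
have h0 : 0 <= \tr (P *m P) by apply: tr_inv2_ge0; apply: sym_shift.
rewrite addrC addKr mulrDr lerDl; apply: mulr_ge0 => //; exact: mulr_ge0.
Qed.

End Shift.

Section Key.
Variable R : realType.

Lemma key_ineq (m n p c b d tau tau' T T2 : R) :
  m * c = n -> 0 <= p -> 0 <= T -> 0 <= T2 -> d * T2 <= tau - T -> 0 < d -> 0 <= b ->
  0 <= tau' - tau -> 0 <= n - m * b - p - b * tau ->
  m + tau <= (tau' - tau) * (n - m * b - p - b * tau) ->
  b / d - 1 <= (n - m * b - p - b * tau) + (tau' - tau) * b ->
  (m - p) + (T + b * T2 - (p + 2 * b * T + b ^+ 2 * T2)) +
    (tau' - T) * ((p + b * T) - (p * c + p * b + b ^+ 2 * T)) <=
  (tau' - T) * (c - b) * (m - p).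
Proof.
move=> hn hp hT hT2 hdT hd hb hE hD ha hb2.
set E := tau' - tau; set D2 := n - m * b - p - b * tau; set Pp := tau - T.
have hPp : 0 <= Pp by apply: le_trans hdT; apply: mulr_ge0 => //; exact: ltW.
have F2 : b * T2 <= b / d * Pp.
  have -> : b * T2 = b / d * (d * T2) by rewrite mulrA divfK // lt0r_neq0.
  apply: ler_wpM2l => //; apply: divr_ge0 => //; exact: ltW.
have e0 : (m - p) + (T + b * T2 - (p + 2 * b * T + b ^+ 2 * T2)) +
    (tau' - T) * ((p + b * T) - (p * c + p * b + b ^+ 2 * T)) -
  (tau' - T) * (c - b) * (m - p) =
  (m - 2 * p + (1 - 2 * b) * T + b * (1 - b) * T2) -
  (tau' - T) * (n - m * b - p * (1 - 2 * b) - b * (1 - b) * T).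
  rewrite -hn; ring.
rewrite -subr_le0 e0 subr_le0.
have F1 : m - 2 * p + (1 - 2 * b) * T + b * (1 - b) * T2 <= m + T + b * T2.
  have : 0 <= b * T by exact: mulr_ge0.
  have : 0 <= b ^+ 2 * T2 by apply: mulr_ge0 => //; exact: sqr_ge0.
  rewrite expr2 => h1 h2; nra.
have hL : tau' - T = E + Pp by rewrite /E /Pp; ring.
have F3 : (tau' - T) * (n - m * b - p - b * T) <=
          (tau' - T) * (n - m * b - p * (1 - 2 * b) - b * (1 - b) * T).
  apply: ler_wpM2l; first by rewrite hL; exact: addr_ge0.
  have : 0 <= b * p by exact: mulr_ge0.
  have : 0 <= b * b * T by apply: mulr_ge0 => //; exact: mulr_ge0.
  move=> h1 h2; nra.
have e4 : n - m * b - p - b * T = D2 + b * Pp by rewrite /D2 /Pp; ring.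
have F5 : Pp * (D2 + E * b) + E * D2 <= (E + Pp) * (D2 + b * Pp).
  have : 0 <= b * (Pp * Pp) by apply: mulr_ge0 => //; exact: mulr_ge0.
  move=> h; nra.
have F6 : Pp * (b / d - 1) <= Pp * (D2 + E * b) by apply: ler_wpM2l.
apply: (@le_trans _ _ ((tau' - T) * (n - m * b - p - b * T))) => //.
rewrite e4 hL.
apply: (@le_trans _ _ (Pp * (D2 + E * b) + E * D2)) => //.
apply: (le_trans F1).
have : m + T + b / d * Pp = Pp * (b / d - 1) + (m + tau) by rewrite /Pp; ring.
move=> e5.
apply: (@le_trans _ _ (m + T + b / d * Pp)); first by rewrite lerD2l.
by rewrite e5; apply: lerD.
Qed.

End Key.

Section Sel.
Variables (R : realType) (m n : nat) (A : 'M[R]_(m, n)) (c : R).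
Hypothesis hAA : A^T *m A = 1%:M.
Hypothesis hrow : forall i, (row i A *m (row i A)^T) 0 0 = c.

Definition Xs p (f : 'I_p -> 'I_m) := rowsub f A.
Definition Gs p (f : 'I_p -> 'I_m) := Xs f *m (Xs f)^T.
Definition hv p (f : 'I_p -> 'I_m) i := row i A *m (Xs f)^T.

Lemma Gs_sym p (f : 'I_p -> 'I_m) : (Gs f)^T = Gs f.
Proof. by rewrite /Gs trmx_mul trmxK. Qed.

Lemma sum_all p (f : 'I_p -> 'I_m) (Z : 'M[R]_p) :
  \sum_i (hv f i *m Z *m (hv f i)^T) 0 0 = \tr (Z *m Gs f).
Proof.
under eq_bigr => i _ do rewrite /hv -row_mul.
rewrite sum_row_quad trmx_mul trmxK -!mulmxA mxtrace_mulC -!mulmxA hAA mulmx1.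
by rewrite mxtrace_mulC -mulmxA.
Qed.

Lemma sum_in p (f : 'I_p -> 'I_m) (Z : 'M[R]_p) :
  \sum_t (hv f (f t) *m Z *m (hv f (f t))^T) 0 0 = \tr (Gs f *m Z *m Gs f).
Proof.
under eq_bigr => t _ do rewrite /hv -row_rowsub -/(Xs f) -row_mul -/(Gs f).
by rewrite sum_row_quad Gs_sym.
Qed.

Lemma tr_Gs p (f : 'I_p -> 'I_m) : \tr (Gs f) = p%:R * c.
Proof.
have := sum_row_quad (Xs f) 1%:M; rewrite mulmx1 -/(Gs f) => <-.
under eq_bigr => t _ do rewrite mulmx1 row_rowsub hrow.
by rewrite sumr_const card_ord mulr_natl.
Qed.

Definition ext p (f : 'I_p -> 'I_m) (i : 'I_m) : 'I_(p + 1) -> 'I_m :=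
  fun t => match split t with inl a => f a | inr _ => i end.

Lemma ext_inj p (f : 'I_p -> 'I_m) i :
  injective f -> i \notin [set f t | t : 'I_p] -> injective (ext f i).
Proof.
move=> fi ni t1 t2; rewrite /ext.
case: splitP => [a1 e1|a1 e1]; case: splitP => [a2 e2|a2 e2].
- by move=> /fi e; apply: val_inj; rewrite /= e1 e2 e.
- by move=> e; case/negP: ni; apply/imsetP; exists a1.
- by move=> e; case/negP: ni; apply/imsetP; exists a2.
- by move=> _; apply: val_inj; rewrite /= e1 e2 !ord1.
Qed.

Lemma Xs_ext p (f : 'I_p -> 'I_m) i : Xs (ext f i) = col_mx (Xs f) (row i A).
Proof.
apply/matrixP => t j; rewrite !mxE /ext.
by case: (split t) => [a|a]; rewrite !mxE.
Qed.

Lemma Gs_ext p (f : 'I_p -> 'I_m) i (b : R) :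
  Gs (ext f i) - b%:M =
  block_mx (Gs f - b%:M) (hv f i)^T (hv f i) (row i A *m (row i A)^T - b%:M).
Proof.
rewrite /Gs Xs_ext tr_col_mx mul_col_row (scalar_mx_block p 1) opp_block_mx add_block_mx.
by rewrite !oppr0 !addr0 /hv trmx_mul trmxK.
Qed.

End Sel.

Section Avg.
Variable R : realType.

Lemma avg_le (I : finType) (O : pred I) (F : I -> R) K :
  (0 < #|O|)%N -> \sum_(i in O) F i <= K * #|O|%:R -> exists2 i, i \in O & F i <= K.
Proof.
move=> /card_gt0P [x xO] hs.
case: (pickP (fun i => (i \in O) && (F i <= K))) => [i /andP [h1 h2]|H].
  by exists i.
have : K * #|O|%:R < \sum_(i in O) F i.
  rewrite mulr_natr -sumr_const; apply: ltr_sum.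
    by apply/hasP; exists x; rewrite ?mem_index_enum.
  by move=> i iO; have := H i; rewrite iO /= => /negbT; rewrite -ltNge.
by rewrite ltNge hs.
Qed.

Lemma avg_lt (I : finType) (O : pred I) (F : I -> R) K :
  \sum_(i in O) F i < K * #|O|%:R -> exists2 i, i \in O & F i < K.
Proof.
move=> hs.
case: (pickP (fun i => (i \in O) && (F i < K))) => [i /andP [h1 h2]|H].
  by exists i.
have : K * #|O|%:R <= \sum_(i in O) F i.
  rewrite mulr_natr -sumr_const; apply: ler_sum.
  by move=> i iO; have := H i; rewrite iO /= => /negbT; rewrite -leNgt.
by rewrite leNgt hs.
Qed.

End Avg.

Section TrId.
Variable R : realType.
Variables (p : nat) (M P : 'M[R]_p) (b : R).
Hypotheses (PM : P *m M = 1%:M) (MP : M *m P = 1%:M).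
Let G := M + b%:M.

Lemma trPG : \tr (P *m G) = p%:R + b * \tr P.
Proof. by rewrite /G mulmxDr PM mul_mx_scalar mxtraceD mxtrace1 mxtraceZ. Qed.

Lemma trPPG : \tr (P *m P *m G) = \tr P + b * \tr (P *m P).
Proof. by rewrite /G mulmxDr -mulmxA PM mulmx1 mul_mx_scalar mxtraceD mxtraceZ. Qed.

Lemma trGPG : \tr (G *m P *m G) = \tr G + b * p%:R + b ^+ 2 * \tr P.
Proof.
rewrite /G mulmxDr !mulmxDl MP mul1mx !mul_scalar_mx !mul_mx_scalar -scalemxAl PM.
rewrite scalerA !mxtraceD !mxtraceZ mxtrace1 mxtrace_scalar.
rewrite expr2; ring.
Qed.

Lemma trGPPG : \tr (G *m (P *m P) *m G) = p%:R + 2 * b * \tr P + b ^+ 2 * \tr (P *m P).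
Proof.
rewrite /G mulmxDr !mulmxDl !mulmxA MP mul1mx -mulmxA PM mulmx1.
rewrite !mul_scalar_mx -!scalemxAl !mul_mx_scalar scalerA.
rewrite !mxtraceD !mxtraceZ mxtrace1.
rewrite expr2; ring.
Qed.

End TrId.

Section Steps.
Variables (R : realType) (m n : nat) (A : 'M[R]_(m, n)) (c : R).
Hypothesis hAA : A^T *m A = 1%:M.
Hypothesis hrow : forall i, (row i A *m (row i A)^T) 0 0 = c.
Hypothesis hmc : m%:R * c = n%:R.

Lemma sum_split p (f : 'I_p -> 'I_m) (F : 'I_m -> R) : injective f ->
  \sum_(i in [predC [set f t | t : 'I_p]]) F i = \sum_i F i - \sum_t F (f t).
Proof.
move=> fi.
have e1 : \sum_i F i = \sum_(i in [set f t | t : 'I_p]) F i +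
    \sum_(i in [predC [set f t | t : 'I_p]]) F i.
  rewrite (bigID (mem [set f t | t : 'I_p])) /=.
  by congr (_ + _); apply: eq_bigl => i; rewrite ?inE.
rewrite e1 big_imset /=; first by rewrite addrAC subrr add0r.
by move=> x y _ _; apply: fi.
Qed.

Lemma card_out p (f : 'I_p -> 'I_m) : injective f ->
  #|[predC [set f t | t : 'I_p]]| = (m - p)%N.
Proof.
move=> fi; have := cardC [set f t | t : 'I_p]; rewrite card_imset // !card_ord => e.
by rewrite -[LHS](addKn p) e.
Qed.

Lemma extend p (f : 'I_p -> 'I_m) (i : 'I_m) (b : R) :
  injective f -> i \notin [set f t | t : 'I_p] -> pdm (Gs A f - b%:M) ->
  0 < c - b - (hv A f i *m invmx (Gs A f - b%:M) *m (hv A f i)^T) 0 0 ->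
  [/\ injective (ext f i), pdm (Gs A (ext f i) - b%:M) &
      \tr (invmx (Gs A (ext f i) - b%:M)) =
      \tr (invmx (Gs A f - b%:M)) +
      (1 + (hv A f i *m invmx (Gs A f - b%:M) *m invmx (Gs A f - b%:M) *m (hv A f i)^T) 0 0)
      / (c - b - (hv A f i *m invmx (Gs A f - b%:M) *m (hv A f i)^T) 0 0)].
Proof.
move=> fi ni hpd hs.
have Msym : (Gs A f - b%:M)^T = Gs A f - b%:M.
  by rewrite linearB /= Gs_sym tr_scalar_mx.
have hs' : 0 < (row i A *m (row i A)^T - b%:M -
   ((hv A f i)^T)^T *m invmx (Gs A f - b%:M) *m (hv A f i)^T) 0 0.
  by rewrite trmxK !e00B hrow sc00.
split; first exact: ext_inj.
  rewrite Gs_ext -{2}[hv A f i]trmxK; exact: border_pd.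
rewrite Gs_ext -{2}[hv A f i]trmxK border_tr // !trmxK.
by rewrite !e00B hrow sc00.
Qed.


Lemma gen_step p (f : 'I_p -> 'I_m) (b d tau tau' : R) :
  injective f -> pdm (Gs A f - b%:M) -> \tr (invmx (Gs A f - b%:M)) <= tau ->
  0 < d -> 0 <= b - d -> (p < m)%N ->
  0 <= tau' - tau ->
  0 <= n%:R - m%:R * (b - d) - p%:R - (b - d) * tau ->
  m%:R + tau <= (tau' - tau) * (n%:R - m%:R * (b - d) - p%:R - (b - d) * tau) ->
  (b - d) / d - 1 <= (n%:R - m%:R * (b - d) - p%:R - (b - d) * tau) + (tau' - tau) * (b - d) ->
  exists f' : 'I_(p + 1) -> 'I_m,
    [/\ injective f', pdm (Gs A f' - (b - d)%:M) &
        \tr (invmx (Gs A f' - (b - d)%:M)) <= tau'].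
Proof.
move=> fi hpd htr hd hb' hpm hE hD ha hbb.
set b' := b - d.
have Nsym : (Gs A f - b%:M)^T = Gs A f - b%:M.
  by rewrite linearB /= Gs_sym tr_scalar_mx.
have eM : Gs A f - b'%:M = (Gs A f - b%:M) + d%:M.
  apply/matrixP => i j; rewrite !mxE; case: (i == j); rewrite /= ?mulr1n ?mulr0n /b'.
    by ring.
  by rewrite !subr0 addr0.
have hsh := shift_tr Nsym hpd (ltW hd); rewrite -eM in hsh.
have Mpd : pdm (Gs A f - b'%:M) by rewrite eM; apply: pdm_shift => //; exact: ltW.
have Msym : (Gs A f - b'%:M)^T = Gs A f - b'%:M by rewrite eM; apply: sym_shift.
have Mu := pdm_unit Mpd.
have hT := tr_inv_ge0 Msym Mpd.
have hT2 := tr_inv2_ge0 Msym.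
set M := Gs A f - b'%:M in hsh Mpd Msym Mu hT hT2 *.
set P := invmx M in hsh hT hT2 *.
have PM : P *m M = 1%:M by apply: mulVmx.
have MP : M *m P = 1%:M by apply: mulmxV.
set T := \tr P in hsh hT *; set T2 := \tr (P *m P) in hsh hT2 *.
have hsh2 : d * T2 <= tau - T by apply: (le_trans hsh); rewrite lerD2r.
have hTt : T <= tau.
  by rewrite -subr_ge0; apply: le_trans hsh2; apply: mulr_ge0 => //; exact: ltW.
set q1 : 'I_m -> R := fun i => (hv A f i *m P *m (hv A f i)^T) 0 0.
set q2 : 'I_m -> R := fun i => (hv A f i *m (P *m P) *m (hv A f i)^T) 0 0.
set L := tau' - T.
have eG : Gs A f = M + b'%:M by rewrite /M subrK.
have hcard := card_out fi.
have hsum : \sum_(i in [predC [set f t | t : 'I_p]]) (1 + q2 i + L * q1 i)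
    <= (L * (c - b')) * #|[predC [set f t | t : 'I_p]]|%:R.
  rewrite sum_split // !big_split /= -!mulr_sumr !sumr_const card_ord hcard -[#|_|]/#|'I_p| card_ord.
  rewrite /q1 /q2 (sum_all hAA) (sum_in A f P) (sum_in A f (P *m P)) (sum_all hAA).
  rewrite eG (trPG _ PM) (trPPG _ PM) (trGPG _ PM MP) (trGPPG _ PM MP).
  rewrite -eG (tr_Gs hrow) natrB ?(ltnW hpm) //.
  have hk := key_ineq hmc (ler0n _ p) hT hT2 hsh2 hd hb' hE hD ha hbb.
  rewrite -/L in hk; apply: (le_trans _ hk).
  rewrite le_eqVlt; apply/orP; left; apply/eqP; rewrite -/T -/T2 /b'; ring.
have hcard0 : (0 < #|[predC [set f t | t : 'I_p]]|)%N by rewrite hcard subn_gt0.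
have [i iO hi] := avg_le hcard0 hsum.
have ni : i \notin [set f t | t : 'I_p] by move: iO; rewrite inE.
have hq2 : 0 <= q2 i.
  rewrite /q2; have := psdm1 (hv A f i *m P); rewrite mulmx1 trmx_mul invmx_sym //.
  by rewrite !mulmxA.
have hL : 0 <= L by rewrite /L; lra.
have hs : 0 < c - b' - q1 i.
  rewrite ltNge; apply/negP => hle.
  have : L * (c - b' - q1 i) <= 0 by apply: mulr_ge0_le0.
  rewrite mulrBr => h.
  move: hi h; set X := L * (c - b'); set Y := L * q1 i => hi h; lra.
have [hi1 hi2 hi3] := extend fi ni Mpd hs.
exists (ext f i); split => //.
rewrite hi3 -/P -/T.
have -> : hv A f i *m P *m P = hv A f i *m (P *m P) by rewrite mulmxA.
rewrite -/(q2 i) -/(q1 i).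
have hfrac : (1 + q2 i) / (c - b' - q1 i) <= L.
  rewrite ler_pdivrMr // mulrBr.
  move: hi; set X := L * (c - b'); set Y := L * q1 i => hi; lra.
move: hfrac; rewrite /L; set Z := (1 + q2 i) / _ => hfrac; lra.
Qed.


Lemma fin_step p (f : 'I_p -> 'I_m) (b tau : R) :
  injective f -> pdm (Gs A f - b%:M) -> \tr (invmx (Gs A f - b%:M)) <= tau ->
  0 <= b -> (p <= m)%N -> 0 < n%:R - m%:R * b - p%:R - b * tau ->
  exists f' : 'I_(p + 1) -> 'I_m, injective f' /\ pdm (Gs A f' - b%:M).
Proof.
move=> fi hpd htr hb hpm hD.
have Msym : (Gs A f - b%:M)^T = Gs A f - b%:M.
  by rewrite linearB /= Gs_sym tr_scalar_mx.
have Mu := pdm_unit hpd.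
have hT := tr_inv_ge0 Msym hpd.
set M := Gs A f - b%:M in hpd htr Msym Mu hT *.
set P := invmx M in htr hT *.
have PM : P *m M = 1%:M by apply: mulVmx.
have MP : M *m P = 1%:M by apply: mulmxV.
set T := \tr P in htr hT *.
set q1 : 'I_m -> R := fun i => (hv A f i *m P *m (hv A f i)^T) 0 0.
have eG : Gs A f = M + b%:M by rewrite /M subrK.
have hcard := card_out fi.
have hsum : \sum_(i in [predC [set f t | t : 'I_p]]) q1 i
    < (c - b) * #|[predC [set f t | t : 'I_p]]|%:R.
  rewrite sum_split // hcard /q1 (sum_all hAA) (sum_in A f P).
  rewrite eG (trPG _ PM) (trGPG _ PM MP) -eG (tr_Gs hrow) natrB //.
  rewrite -subr_gt0.
  have e : (c - b) * (m%:R - p%:R) - (p%:R + b * T - (p%:R * c + b * p%:R + b ^+ 2 * T)) =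
     (n%:R - m%:R * b - p%:R - b * tau) + (b * (tau - T) + 2 * (b * p%:R) + b ^+ 2 * T).
    by rewrite -hmc; ring.
  rewrite e; apply: (lt_le_trans hD); rewrite lerDl.
  apply: addr_ge0; [apply: addr_ge0|].
  - by apply: mulr_ge0 => //; rewrite subr_ge0.
  - by apply: mulr_ge0 => //; apply: mulr_ge0.
  - by apply: mulr_ge0 => //; apply: sqr_ge0.
have [i iO hi] := avg_lt hsum.
have ni : i \notin [set f t | t : 'I_p] by move: iO; rewrite inE.
have hs : 0 < c - b - q1 i by rewrite subr_gt0.
have [hi1 hi2 hi3] := extend fi ni hpd hs.
by exists (ext f i).
Qed.

End Steps.

Section Sched.
Variable R : realType.
Variables (m n : nat) (s : R).
Hypotheses (hs0 : 0 < s) (hs1 : s < 1) (hm : (0 < m)%N).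

Definition bj (j : nat) : R := (1 - s) * (n%:R * s - j%:R) / (s * m%:R).
Definition tj (j : nat) : R := m%:R * j%:R / (n%:R * s - j%:R).
Definition dl : R := (1 - s) / (s * m%:R).

Lemma mR0 : m%:R != 0 :> R. Proof. by rewrite pnatr_eq0 -lt0n. Qed.
Lemma mRgt0 : 0 < m%:R :> R. Proof. by rewrite ltr0n. Qed.

Lemma bj_step j : bj j - dl = bj j.+1.
Proof.
rewrite /bj /dl -addn1 natrD; have := mR0; have := hs0 => h1 h2.
by field; rewrite h2 gt_eqF.
Qed.

Lemma sched_ok (j : nat) : 1 < n%:R * s - j%:R ->
  let b := bj j in let d := dl in let tau := tj j in let tau' := tj j.+1 in
  [/\ 0 < d, 0 <= b - d, 0 <= tau' - tau,
      0 <= n%:R - m%:R * (b - d) - j%:R - (b - d) * tau &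
      m%:R + tau <= (tau' - tau) * (n%:R - m%:R * (b - d) - j%:R - (b - d) * tau) /\
      (b - d) / d - 1 <= (n%:R - m%:R * (b - d) - j%:R - (b - d) * tau) + (tau' - tau) * (b - d)].
Proof.
move=> hu b d tau tau'.
set u := n%:R * s - j%:R.
have u0 : 0 < u by apply: lt_trans hu.
have u1 : 0 < u - 1 by rewrite subr_gt0.
have m0 := mRgt0.
have s1 : 0 < 1 - s by rewrite subr_gt0.
have hbd : b - d = (1 - s) * (u - 1) / (s * m%:R).
  rewrite /b /d bj_step /bj -addn1 natrD -/u.
  by rewrite /u opprD addrA.
have htau : tau = m%:R * j%:R / u by [].
have htau' : tau' = m%:R * (j%:R + 1) / (u - 1).
  by rewrite /tau' /tj -addn1 natrD /u opprD addrA.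
have hE : tau' - tau = m%:R * (n%:R * s) / (u * (u - 1)).
  rewrite htau htau' /u; field.
  by rewrite -/u; apply/andP; split; rewrite gt_eqF.
have hD2 : n%:R - m%:R * (b - d) - j%:R - (b - d) * tau = u + n%:R * (1 - s) / u.
  rewrite hbd htau /u; field.
  by rewrite -/u (gt_eqF u0) mR0 (gt_eqF hs0).
have hns : 0 < n%:R * s.
  by apply: (lt_le_trans u0); rewrite /u lerBlDr lerDl ler0n.
have hbd0 : 0 <= b - d by rewrite hbd; apply: divr_ge0; apply: mulr_ge0; exact: ltW.
have hE0 : 0 < tau' - tau by rewrite hE; apply: divr_gt0; [exact: mulr_gt0|exact: mulr_gt0].
have hn0 : 0 <= n%:R * (1 - s) / u.
  by apply: divr_ge0; [apply: mulr_ge0; [exact: ler0n|exact: ltW]|exact: ltW].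
split => //.
- by rewrite /d /dl; apply: divr_gt0 => //; exact: mulr_gt0.
- exact: ltW.
- by rewrite hD2; apply: addr_ge0 => //; exact: ltW.
split.
- have e1 : m%:R + tau = m%:R * (n%:R * s) / u.
    rewrite htau /u; field; by rewrite -/u gt_eqF.
  rewrite e1 hD2 hE.
  have e2 : m%:R * (n%:R * s) / (u * (u - 1)) * (u + n%:R * (1 - s) / u) =
     (m%:R * (n%:R * s) / u) * ((u + n%:R * (1 - s) / u) / (u - 1)).
    field; by apply/andP; split; rewrite gt_eqF.
  have hK : 0 <= m%:R * (n%:R * s) / u.
    by apply: divr_ge0; [apply: mulr_ge0 => //; exact: ltW|exact: ltW].
  rewrite e2 ler_peMr // ler_pdivlMr // mul1r; lra.
- have e3 : (b - d) / d - 1 = u - 2.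
    rewrite hbd /d /dl; field.
    by apply/andP; split; rewrite ?mulf_neq0 ?gt_eqF.
  rewrite e3 hD2.
  have : 0 <= (tau' - tau) * (b - d) by apply: mulr_ge0 => //; exact: ltW.
  lra.
Qed.


Variables (A : 'M[R]_(m, n)) (c : R).
Hypotheses (hAA : A^T *m A = 1%:M) (hrow : forall i, (row i A *m (row i A)^T) 0 0 = c).
Hypotheses (hmc : m%:R * c = n%:R) (hnm : (n <= m)%N).

Definition Inv j := exists p (f : 'I_p -> 'I_m),
  [/\ p = j, injective f, pdm (Gs A f - (bj j)%:M) & \tr (invmx (Gs A f - (bj j)%:M)) <= tj j].

Lemma inv0 : Inv 0.
Proof.
exists 0%N, (fun _ => Ordinal hm); split => //.
- by case.
- by move=> v; rewrite thinmx0 eqxx.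
- by rewrite /mxtrace big_ord0 /tj mulr0 mul0r.
Qed.

Lemma jm (j : nat) : j%:R < n%:R * s -> (j < m)%N.
Proof.
move=> hj; apply: (leq_trans _ hnm); rewrite -(ltr_nat R).
apply: (lt_le_trans hj); rewrite ger_pMr ?ltW //.
by rewrite ltr0n; apply: contraTT hj; rewrite -eqn0Ngt => /eqP ->; rewrite mul0r -leNgt ler0n.
Qed.

Lemma inv_step j : (j.+1)%:R < n%:R * s -> Inv j -> Inv j.+1.
Proof.
move=> hj [p [f [ep fi hpd htr]]]; subst p.
have hu : 1 < n%:R * s - j%:R by rewrite ltrBrDr addrC natr1.
have [h1 h2 h3 h4 [h5 h6]] := sched_ok hu.
have hjm : (j < m)%N by apply: jm; apply: lt_trans hj; rewrite ltr_nat.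
have [f' [fi' pd' tr']] := gen_step hAA hrow hmc fi hpd htr h1 h2 hjm h3 h4 h5 h6.
exists (j + 1)%N, f'; split => //; first by rewrite addn1.
- by rewrite -bj_step.
- by rewrite -bj_step.
Qed.

Lemma iterInv j : j%:R < n%:R * s -> Inv j.
Proof.
elim: j => [|j IH] hj; first exact: inv0.
apply: inv_step => //; apply: IH; apply: lt_trans hj; by rewrite ltr_nat.
Qed.

Lemma final_sel K : K%:R < n%:R * s ->
  exists f : 'I_(K + 1) -> 'I_m, injective f /\ pdm (Gs A f - (bj K)%:M).
Proof.
move=> hK; have [p [f [ep fi hpd htr]]] := iterInv hK; subst p.
have u0 : 0 < n%:R * s - K%:R by rewrite subr_gt0.
apply: (fin_step hAA hrow hmc fi hpd htr).
- rewrite /bj; apply: divr_ge0; [apply: mulr_ge0; [rewrite subr_ge0; exact: ltW|exact: ltW]|].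
  by apply: mulr_ge0; [exact: ltW|exact: ler0n].
- exact/ltnW/jm.
- have -> : n%:R - m%:R * bj K - K%:R - bj K * tj K = n%:R * s - K%:R.
    rewrite /bj /tj; field.
    by rewrite (gt_eqF u0) mR0 (gt_eqF hs0).
  exact: u0.
Qed.

End Sched.

Section Conv.
Variable R : realType.
Variables (m n : nat) (A : 'M[R]_(m, n)).

Lemma sqnormE k (u : 'cV[R]_k) : sqnorm u = (u^T *m u) 0 0.
Proof. by rewrite /sqnorm mxE; apply: eq_bigr => i _; rewrite !mxE expr2. Qed.

Lemma conv q (f : 'I_q -> 'I_m) (t0 : 'I_q) (b : R) :
  injective f -> pdm (Gs A f - b%:M) ->
  forall w : 'cV[R]_#|[set f t | t : 'I_q]|,
    b * sqnorm w <= sqnorm ((rows_of A [set f t | t : 'I_q])^T *m w).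
Proof.
move=> fi hpd w.
set J := [set f t | t : 'I_q].
have Hx0 : f t0 \in J by apply/imsetP; exists t0.
set h := fun t => enum_rank_in Hx0 (f t).
set v : 'rV[R]_q := \row_t w (h t) 0.
have hinj : {in predT &, injective f} by move=> x y _ _; apply: fi.
have eA : sqnorm w = (v *m v^T) 0 0.
  rewrite /sqnorm mxE.
  have -> : \sum_(i < #|J|) w i 0 ^+ 2 =
            \sum_(i in J) w (enum_rank_in Hx0 i) 0 ^+ 2.
    rewrite [RHS]big_enum_val /=; apply: eq_bigr => i _; by rewrite enum_valK_in.
  rewrite big_imset //=; apply: eq_bigr => t _; by rewrite !mxE expr2.
have eB : (rows_of A J)^T *m w = (Xs A f)^T *m v^T.
  apply/matrixP => j k; rewrite !mxE ord1.
  have -> : \sum_(i < #|J|) (rows_of A J)^T j i * w i 0 =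
            \sum_(i in J) A i j * w (enum_rank_in Hx0 i) 0.
    rewrite [RHS]big_enum_val /=; apply: eq_bigr => i _; by rewrite enum_valK_in !mxE.
  rewrite big_imset //=; apply: eq_bigr => t _; by rewrite !mxE.
rewrite eA eB sqnormE trmx_mul !trmxK mulmxA -[v *m Xs A f *m (Xs A f)^T]mulmxA -/(Gs A f).
have := pdm_psdm hpd v; rewrite mulmxBr mulmxBl e00B mul_mx_scalar -scalemxAl e00Z.
by rewrite subr_ge0.
Qed.

End Conv.

Unset Implicit Arguments. Set Strict Implicit. Set Printing Implicit Defensive.

Theorem corollary2 (R : realType) (d : R) (m n : nat) (A : 'M[R]_(m, n)) :
  0 < d -> d < 1 ->
  orth_col_submx A ->
  (forall i j : 'I_m, row_sqnorm A i = row_sqnorm A j) ->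
  exists J : {set 'I_m},
    (1 - d) * n%:R <= #|J|%:R /\
    forall w : 'cV[R]_#|J|,
      Cd d * (n%:R / m%:R) * sqnorm w <= sqnorm ((rows_of A J)^T *m w).
Proof.
move=> d0 d1 [U [f0 [[hU1 hU2] [fi0 eA]]]] hrn.
have hAA : A^T *m A = 1%:M.
  apply/matrixP => a b.
  have e := congr1 (fun M : 'M[R]_m => M (f0 a) (f0 b)) hU2.
  rewrite /= !mxE (inj_eq fi0) in e.
  rewrite [RHS]mxE -e eA mxE; apply: eq_bigr => i _; by rewrite !mxE.
have hnm : (n <= m)%N by have := leq_card f0 fi0; rewrite !card_ord.
have sq_ge0 : forall k (u : 'cV[R]_k), 0 <= sqnorm u.
  by move=> k u; apply: sumr_ge0 => i _; exact: sqr_ge0.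
case: (posnP n) => [n0|npos].
  exists set0; split; first by rewrite n0 mulr0 cards0.
  by move=> w; rewrite (_ : n%:R = 0) ?n0 // mul0r mulr0 mul0r.
have hm : (0 < m)%N by apply: leq_trans hnm.
set i0 : 'I_m := Ordinal hm.
set c := row_sqnorm A i0.
have hrow : forall i, (row i A *m (row i A)^T) 0 0 = c.
  move=> i; rewrite /c -(hrn i) /row_sqnorm mxE; apply: eq_bigr => j _.
  by rewrite !mxE expr2.
have hmc : m%:R * c = n%:R.
  have := sum_row_quad A 1%:M; rewrite mulmx1 mxtrace_mulC hAA mxtrace1 => <-.
  under eq_bigr => i _ do rewrite mulmx1 hrow.
  by rewrite sumr_const card_ord mulr_natl.
set s := Num.sqrt (1 - d).
have d1' : 0 < 1 - d by rewrite subr_gt0.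
have hs0 : 0 < s by rewrite sqrtr_gt0.
have hs1 : s < 1 by rewrite /s -{2}sqrtr1 ltr_sqrt // ltrBlDr ltrDl.
have hs2 : s ^+ 2 = 1 - d by rewrite sqr_sqrtr // ltW.
have nR : 0 < n%:R :> R by rewrite ltr0n.
set K := Num.truncn ((1 - d) * n%:R).
have hK1 : K%:R <= (1 - d) * n%:R.
  by rewrite truncn_le; apply: mulr_ge0; [exact: ltW|exact: ler0n].
have hK2 : (1 - d) * n%:R < (K + 1)%:R by rewrite addn1 -truncn_le_nat.
have hK : K%:R < n%:R * s.
  apply: (le_lt_trans hK1); rewrite -hs2 expr2 -mulrA [n%:R * s]mulrC gtr_pMl //.
  exact: mulr_gt0.
have [f [fi hpd]] := final_sel hs0 hs1 hm hAA hrow hmc hnm hK.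
exists [set f t | t : 'I_(K + 1)]; split.
  by rewrite card_imset // card_ord ltW.
move=> w.
have t0 : 'I_(K + 1) by exists K; rewrite addn1.
have hc := conv t0 fi hpd w.
apply: le_trans hc; apply: ler_wpM2r; first exact: sq_ge0.
rewrite /Cd -/s /bj.
have -> : (1 - s) ^+ 2 * (n%:R / m%:R) = (1 - s) * (n%:R * s - s ^+ 2 * n%:R) / (s * m%:R).
  have m0 : m%:R != 0 :> R by rewrite pnatr_eq0 -lt0n.
  field; by rewrite m0 gt_eqF.
apply: ler_wpM2r; first by apply: ltW; rewrite invr_gt0; apply: mulr_gt0 => //; rewrite ltr0n.
apply: ler_wpM2l; first by rewrite subr_ge0 ltW.
by rewrite lerD2l lerN2 hs2.
Qed.
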